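(* Let $\mathcal{J}=\langle U,g,f\rangle$ be an optimal control problem satisfying the standing assumptions below, and let $V:\mathbb{R}^d\to\mathbb{R}$. Then $\mathcal{J}$ admits $V$ as its general limit value if and only if there is general uniform convergence of the value functions $\{V_\theta\}$ to $V$, i.e. for every $\varepsilon>0$ there exist $S>0$ and $\eta>0$ such that every $\theta\in\Delta(\mathbb{R}_+)$ with $\overline{TV}_S(\theta)\leq\eta$ satisfies $\|V_\theta-V\|_\infty\leq\varepsilon$.
   Context: Setting: $U$ is a metric space, $g:\mathbb{R}^d\times U\to\mathbb{R}$ is Borel measurable and bounded, $f:\mathbb{R}^d\times U\to\mathbb{R}^d$ is Borel measurable with $\|f(y,u)-f(\bar y,u)\|\leq L\|y-\bar y\|$ and $\|f(y,u)\|\leq a(1+\|y\|)$ for constants $L\ge0,a>0$. $\mathcal{U}$ is the set of measurable controls $u:[0,+\infty)\to U$; $y(t,u,y_0)$ is the solution of $y'=f(y,u)$, $y(0)=y_0$. For a Borel probability measure $\theta\in\Delta(\mathbb{R}_+)$ (an evaluation), $V_\theta(y_0)=\inf_{u\in\mathcal{U}}\int_{[0,+\infty)} g(y(s,u,y_0),u(s))\,d\theta(s)$. $TV_s(\theta)=\sup_{Q\in\mathcal{B}(\mathbb{R}_+)}|\theta(Q)-\theta(Q+s)|$, $\overline{TV}_S(\theta)=\sup_{0\le s\le S}TV_s(\theta)$. A sequence $(\theta^k)$ satisfies the long-term condition (LTC) if $\overline{TV}_S(\theta^k)\to0$ for every $S>0$. $\mathcal{J}$ admits $V$ as general limit value if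 for every sequence $(\theta^k)$ satisfying the LTC, $V_{\theta^k}\to V$ uniformly on $\mathbb{R}^d$. *)

(* Defs.v *)
From HB Require Import structures.
From mathcomp Require Import all_boot all_order all_algebra.
From mathcomp Require Import all_classical all_reals all_analysis.
Set Implicit Arguments. Unset Strict Implicit. Unset Printing Implicit Defensive.
Import Order.TTheory GRing.Theory Num.Theory.
Import numFieldNormedType.Exports.
Local Open Scope classical_set_scope.
Local Open Scope ring_scope.

Definition borel_set (T : topologicalType) (A : set T) : Prop :=
  <<s [set B : set T | open B] >> A.

Definition borel_measurable (X Y : topologicalType) (h : X -> Y) : Prop :=
  forall B : set Y, open B -> borel_set (h @^-1` B).

Section Problem.
Variables (R : realType) (d : nat) (U : metricType R).
Notation Rd := 'rV[R]_d.

(* Measurable controls u : [0,+oo) -> U (values on (-oo,0) are irrelevant):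
   Borel measurable on [0,+oo). *)
Definition control (u : R -> U) : Prop :=
  forall B : set U, open B -> measurable (`[0, +oo[%classic `&` u @^-1` B).

(* y is a (Caratheodory) solution on [0,+oo) of y' = f(y,u), y(0) = y0:
   y t = y0 + \int_0^t f(y s, u s) ds, componentwise. *)
Definition is_solution (f : Rd -> U -> Rd) (u : R -> U) (y0 : Rd)
  (y : R -> Rd) : Prop :=
  y 0 = y0 /\
  forall t : R, 0 <= t -> forall i : 'I_d,
    lebesgue_measure.-integrable `[0, t] (fun s => (f (y s) (u s) ord0 i)%:E) /\
    y t ord0 i = y0 ord0 i +
      Rintegral lebesgue_measure `[0, t] (fun s => f (y s) (u s) ord0 i).

(* y(., u, y0): "the" solution (chosen; unique on [0,+oo) under the standing
   assumptions). *)
Definition traj (f : Rd -> U -> Rd) (u : R -> U) (y0 : Rd) : R -> Rd :=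
  match pselect (exists y, is_solution f u y0 y) with
  | left H => projT1 (cid H)
  | right _ => fun _ => y0
  end.

Definition evaluation (th : probability R R) : Prop :=
  th `[0, +oo[%classic = 1%E.

Definition Vtheta (g : Rd -> U -> R) (f : Rd -> U -> Rd)
  (th : probability R R) (y0 : Rd) : R :=
  fine (ereal_inf [set (\int[th]_(s in `[0%R, +oo[%classic) (g (traj f u y0 s) (u s))%:E)%E
                  | u in control]).

Definition TV (th : probability R R) (s : R) : \bar R :=
  ereal_sup [set `|th Q - th [set (q + s)%R | q in Q]|%E
            | Q in [set Q : set R | measurable Q /\ Q `<=` `[0, +oo[%classic]].

Definition TVbar (th : probability R R) (S : R) : \bar R :=
  ereal_sup [set TV th s | s in `[0, S]%classic].

Definition LTC (th : nat -> probability R R) : Prop :=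
  forall S : R, 0 < S -> TVbar (th k) S @[k --> \oo] --> 0%E.

Definition general_limit_value (g : Rd -> U -> R) (f : Rd -> U -> Rd)
  (V : Rd -> R) : Prop :=
  forall th : nat -> probability R R, (forall k, evaluation (th k)) -> LTC th ->
    forall eps : R, 0 < eps -> exists N : nat, forall k, (N <= k)%N ->
      forall y0 : Rd, `|Vtheta g f (th k) y0 - V y0| <= eps.

Definition general_uniform_convergence (g : Rd -> U -> R) (f : Rd -> U -> Rd)
  (V : Rd -> R) : Prop :=
  forall eps : R, 0 < eps -> exists S : R, 0 < S /\ exists eta : R, 0 < eta /\
    forall th : probability R R, evaluation th -> (TVbar th S <= eta%:E)%E ->
      forall y0 : Rd, `|Vtheta g f th y0 - V y0| <= eps.

Definition standing_assumptions (g : Rd -> U -> R) (f : Rd -> U -> Rd) : Prop :=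
  borel_measurable (fun p : Rd * U => g p.1 p.2) /\
  (exists M : R, forall y u, `|g y u| <= M) /\
  borel_measurable (fun p : Rd * U => f p.1 p.2) /\
  (exists L : R, 0 <= L /\ forall y yb u, `|f y u - f yb u| <= L * `|y - yb|) /\
  (exists a : R, 0 < a /\ forall y u, `|f y u| <= a * (1 + `|y|)).

End Problem.

(* Main.v *)
Require Import Defs.
From HB Require Import structures.
From mathcomp Require Import all_boot all_order all_algebra.
From mathcomp Require Import all_classical all_reals all_analysis.
From mathcomp Require Import zify.
From Stdlib Require Import Lia.
Import Order.TTheory GRing.Theory Num.Theory.
Import numFieldNormedType.Exports.
Local Open Scope ring_scope.
Local Open Scope classical_set_scope.

Lemma TV_ge0 (R : realType) (th : probability R R) s : (0 <= TV th s)%E.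
Proof.
rewrite /TV; apply: (@le_trans _ _ (`|th set0 - th [set (q + s)%R | q in set0]|)%E).
  exact: abse_ge0.
apply: ereal_sup_ubound; exists set0 => //; split => //.
Qed.

Lemma TVbar_ge0 (R : realType) (th : probability R R) S : 0 <= S ->
  (0 <= TVbar th S)%E.
Proof.
move=> S0; apply: (@le_trans _ _ (TV th 0)); first exact: TV_ge0.
apply: ereal_sup_ubound; exists 0 => //=.
by rewrite in_itv /= lexx.
Qed.

Lemma TVbar_le (R : realType) (th : probability R R) S S' : S <= S' ->
  (TVbar th S <= TVbar th S')%E.
Proof.
move=> SS; apply: ereal_sup_le => x [s + <-] => /=.
rewrite !in_itv /= => /andP[s0 sS]; exists s => //=.
by rewrite in_itv /= s0 (le_trans sS).
Qed.

Theorem mainTheorem6 (R : realType) (d : nat) (U : metricType R)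
  (g : 'rV[R]_d -> U -> R) (f : 'rV[R]_d -> U -> 'rV[R]_d)
  (V : 'rV[R]_d -> R) :
  standing_assumptions g f ->
  (general_limit_value g f V <-> general_uniform_convergence g f V).
Proof.
move=> _; split.
- move=> H eps eps0; apply: contrapT => Hn.
  have Hk : forall k : nat, exists th : probability R R,
      evaluation th /\ (TVbar th k.+1%:R <= (k.+1%:R^-1)%:E)%E /\
      exists y0, eps < `|Vtheta g f th y0 - V y0|.
    move=> k; apply: contrapT => Hk; apply: Hn; exists k.+1%:R; split => //.
    exists k.+1%:R^-1; split; first by rewrite invr_gt0.
    move=> th evth Hth y0; rewrite leNgt; apply/negP => Hlt.
    by apply: Hk; exists th; split => //; split => //; exists y0.
  have [th Hth] := choice Hk.
  have ev : forall k, evaluation (th k) by move=> k; case: (Hth k).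
  have ltc : LTC th.
    move=> S S0.
    apply: (@squeeze_cvge _ _ _ _ (fun=> 0%E) _ (EFin \o @harmonic R)); last 2 first.
    - exact: cvg_cst.
    - exact: cvge_harmonic.
    have [M HM] : exists M : nat, S <= M%:R.
      exists (Num.truncn S).+1; apply/ltW; exact: truncnS_gt.
    near=> k; rewrite (@TVbar_ge0 _ _ _ (ltW S0)) /=.
    apply: (le_trans (@TVbar_le _ _ _ k.+1%:R _)).
      apply: (le_trans HM); rewrite ler_nat; near: k.
      by exists M.-1 => // k /= Mk; lia.
    by case: (Hth k) => _ [].
  have [N HN] := H th ev ltc eps eps0.
  case: (Hth N) => _ [_ [y0 Hy0]].
    by have := HN N (leqnn N) y0; rewrite leNgt Hy0.
- move=> H th ev ltc eps eps0.
  have [S [S0 [eta [eta0 HS]]]] := H eps eps0.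
  have /fine_cvgP[Hfin Hc] := ltc S S0.
  have := cvgr_lt 0 Hc eta eta0.
  move=> Hlt.
  have : \forall k \near \oo, (TVbar (th k) S <= eta%:E)%E.
    near=> k; have fk : TVbar (th k) S \is a fin_num by near: k; exact: Hfin.
    have lt : fine (TVbar (th k) S) < eta by near: k; exact: Hlt.
    by rewrite -(fineK fk) lee_fin ltW.
  case => N _ HN; exists N => k Nk y0.
  exact: HS (ev k) (HN k Nk) y0.
Unshelve. all: end_near.
Qed.
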